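(* Let $\alpha\in\mathbb C$ and $n\ge 0$ an integer. The linear span of $P_{0,\alpha},P_{1,\alpha},\ldots,P_{n,\alpha}$ coincides with the linear span $\mathcal S_{n,\alpha}$ of $I,A_\alpha,A_\alpha^2,\ldots,A_\alpha^n$ (over the same scalar field). In particular every matrix in $\mathcal S_{n,\alpha}$ can be written as $\sum_{i=0}^n a_iP_{i,\alpha}=T(a)+\sum_{i=1}^n a_iH_{i,\alpha}$ with $a(z)=a_0+\sum_{i=1}^na_i(z^i+z^{-i})$, i.e. as a symmetric banded Toeplitz matrix plus a Hankel matrix.
   Context: All matrices are semi-infinite with rows and columns indexed by the positive integers; $I$ is the semi-infinite identity and $e_1$ its first column. $T(a)$ denotes the Toeplitz matrix with $(i,j)$ entry $a_{j-i}$ for $a(z)=\sum_{i\in\mathbb Z}a_iz^i$. For $v(z)=\sum_{i\ge1}v_iz^i$, $H(v)$ is the Hankel matrix with $(i,j)$ entry $v_{i+j-1}$. $A_\alpha:=T(z+z^{-1})+\alpha e_1e_1^T$. Let $\theta=\alpha^2-1$, $h_1(z)=\alpha z$, and $h_n(z)=\theta\sum_{i=1}^{n-1}\alpha^{n-i-1}z^i+\alpha z^n$ for $n\ge2$. Define $H_{n,\alpha}=H(h_n)$, $P_{0,\alpha}=I$ and $P_{n,\alpha}=T(z^n+z^{-n})+H_{n,\alpha}$ for $n\ge1$. *)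

(* Defs.v *)
(* Semi-infinite matrices over a field F, represented as
   functions nat -> nat -> F.  CONVENTION: 0-based indices; the entry
   (i, j) of the Rocq function is the paper's entry (i+1, j+1). *)
From mathcomp Require Import all_boot all_algebra.
From mathcomp Require Import reals complex.
Set Implicit Arguments. Unset Strict Implicit. Unset Printing Implicit Defensive.
Import GRing.Theory Num.Theory.
Local Open Scope ring_scope.

Definition simat (F : Type) := nat -> nat -> F.

Section SemiInfinite.
Variable F : fieldType.

Definition Iinf : simat F := fun i j => if i == j then 1 else 0.

Definition E11 : simat F := fun i j => if (i == 0%N) && (j == 0%N) then 1 else 0.

Definition Toeplitz (a : int -> F) : simat F := fun i j => a (j%:Z - i%:Z).

(* H(v): paper (i,j) entry v_{i+j-1} (1-based) = v_{i+j+1} in 0-based indices;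
   v given by its coefficients v : nat -> F (v 0 unused). *)
Definition Hankel (v : nat -> F) : simat F := fun i j => v (i + j + 1)%N.

Definition zpm (n : nat) : int -> F :=
  fun k => (if k == n%:Z then 1 else 0) + (if k == - n%:Z then 1 else 0).

Definition Aalpha (alpha : F) : simat F :=
  fun i j => Toeplitz (zpm 1) i j + alpha * E11 i j.

(* coefficients of h_n: h_n(z) = theta sum_{i=1}^{n-1} alpha^{n-i-1} z^i + alpha z^n,
   theta = alpha^2 - 1 (this also gives h_1 = alpha z). *)
Definition hcoef (alpha : F) (n k : nat) : F :=
  if (1 <= k < n)%N then (alpha ^+ 2 - 1) * alpha ^+ (n - k - 1)
  else if k == n then alpha else 0.

Definition Hna (n : nat) (alpha : F) : simat F := Hankel (hcoef alpha n).

Definition Pna (n : nat) (alpha : F) : simat F :=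
  if n is 0 then Iinf
  else fun i j => Toeplitz (zpm n) i j + Hna n alpha i j.

(* Product X * Y when X has upper bandwidth <= b (X i k = 0 for k > i + b):
   then (X Y)_{ij} = sum_{k <= i + b} X_{ik} Y_{kj} is a finite sum. *)
Definition mul_band (b : nat) (X Y : simat F) : simat F :=
  fun i j => \sum_(k < (i + b).+1) X i k * Y k j.

(* A_alpha is tridiagonal (upper bandwidth 1), so A_alpha^k is computed exactly *)
Definition Apow (alpha : F) (k : nat) : simat F :=
  iter k (mul_band 1 (Aalpha alpha)) Iinf.

Definition lincomb (n : nat) (c : 'I_n.+1 -> F) (M : nat -> simat F) : simat F :=
  fun i j => \sum_(k < n.+1) c k * M k i j.

Definition in_span (n : nat) (M : nat -> simat F) (X : simat F) : Prop :=
  exists c : 'I_n.+1 -> F, X = lincomb c M.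

Definition symlaurent (n : nat) (a : 'I_n.+1 -> F) : int -> F :=
  fun m => if (`|m| <= n)%N then a (inord `|m|) else 0.

End SemiInfinite.

(* Main.v *)
Require Import Defs.
From mathcomp Require Import all_boot all_algebra.
From mathcomp Require Import reals complex.
From mathcomp Require Import zify ring.
From Stdlib Require Import ClassicalEpsilon FunctionalExtensionality.
Set Implicit Arguments. Unset Strict Implicit. Unset Printing Implicit Defensive.
Import GRing.Theory Num.Theory.
Local Open Scope ring_scope.

Ltac dec := repeat (match goal with |- context [(?a == ?b :> nat)] =>
   case: (@eqP nat a b) => ? end); try (exfalso; lia).

Section S.
Variable F : fieldType.
Variable alpha : F.

Lemma ToepE k i j : Toeplitz (zpm F k) i j =
  (if j == (i + k)%N then 1 else 0) + (if i == (j + k)%N then 1 else 0).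
Proof.
rewrite /Toeplitz /zpm.
have -> : (j%:Z - i%:Z == k%:Z) = (j == i + k)%N by apply/eqP/eqP; lia.
by have -> : (j%:Z - i%:Z == - k%:Z) = (i == j + k)%N by apply/eqP/eqP; lia.
Qed.

Lemma AalphaE i l : Aalpha alpha i l =
  (if l == i.+1 then 1 else 0) + (if i == l.+1 then 1 else 0) +
  (if (i == 0%N) && (l == 0%N) then alpha else 0).
Proof.
rewrite /Aalpha ToepE /E11 !addn1; by case: ((i == 0%N) && (l == 0%N)); rewrite ?mulr1 ?mulr0.
Qed.

Lemma mulAE X i j : mul_band 1 (Aalpha alpha) X i j =
  (if i is i'.+1 then X i' j else 0) + X i.+1 j +
  (if i == 0%N then alpha * X 0%N j else 0).
Proof.
rewrite /mul_band; case: i => [|i].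
  rewrite !big_ord_recr big_ord0 /= !AalphaE /=; ring.
rewrite addn1 !big_ord_recr /= big1; last first.
  move=> l _; rewrite AalphaE /=.
  have l1 : (l < i)%N := ltn_ord l.
  dec; rewrite /=; ring.
rewrite !AalphaE; dec; rewrite /=; ring.
Qed.



Definition spanN (m : nat) (M : nat -> simat F) (X : simat F) : Prop :=
  exists c : nat -> F, X = fun i j => \sum_(k < m.+1) c k * M k i j.

Lemma in_spanE n M X : in_span n M X <-> spanN n M X.
Proof.
split=> [[c ->]|[c ->]].
  exists (fun k => c (inord k)); apply: functional_extensionality=> i; apply: functional_extensionality=> j.
  by apply: eq_bigr => k _; rewrite inord_val.
by exists (fun k => c (val k)).
Qed.

Lemma span_mono m p M X : (m <= p)%N -> spanN m M X -> spanN p M X.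
Proof.
move=> mp [c ->]; exists (fun k => if (k < m.+1)%N then c k else 0).
apply: functional_extensionality=> i; apply: functional_extensionality=> j.
rewrite (big_ord_widen p.+1 (fun k => c k * M k i j)) //.
by rewrite big_mkcond /=; apply: eq_bigr => k _; case: ifP; rewrite ?mul0r.
Qed.

Lemma span_single m M k : (k <= m)%N -> spanN m M (M k).
Proof.
move=> km; exists (fun l => if l == k then 1 else 0).
apply: functional_extensionality=> i; apply: functional_extensionality=> j.
have km' : (k < m.+1)%N by [].
rewrite (bigD1 (Ordinal km')) //= eqxx mul1r big1 ?addr0 // => l /eqP Hl.
case: eqP; rewrite ?mul0r // => E; exfalso; apply: Hl; exact: val_inj.
Qed.

Lemma span_comb m M N (cs : nat -> F) p :
  (forall k, (k <= p)%N -> spanN m N (M k)) ->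
  spanN m N (fun i j => \sum_(k < p.+1) cs k * M k i j).
Proof.
move=> H.
have H' : forall k, exists d : nat -> F, (k <= p)%N ->
    M k = fun i j => \sum_(l < m.+1) d l * N l i j.
  move=> k; case: (leqP k p) => kp.
    by have [d ->] := H k kp; exists d.
  by exists (fun _ => 0).
pose d k := proj1_sig (constructive_indefinite_description _ (H' k)).
have dP k : (k <= p)%N -> M k = fun i j => \sum_(l < m.+1) d k l * N l i j.
  exact: (proj2_sig (constructive_indefinite_description _ (H' k))).
exists (fun l => \sum_(k < p.+1) cs k * d k l).
apply: functional_extensionality=> i; apply: functional_extensionality=> j.
transitivity (\sum_(k < p.+1) cs k * \sum_(l < m.+1) d k l * N l i j).
  by apply: eq_bigr => k _; rewrite (dP k) // -ltnS.
rewrite (eq_bigr (fun k : 'I_p.+1 => \sum_(l < m.+1) cs k * (d k l * N l i j)));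
  last by move=> k _; rewrite mulr_sumr.
rewrite exchange_big /=; apply: eq_bigr => l _; rewrite mulr_suml.
by apply: eq_bigr => k _; rewrite mulrA.
Qed.

Lemma span_add m M X Y b : spanN m M X -> spanN m M Y ->
  spanN m M (fun i j => X i j + b * Y i j).
Proof.
move=> [c ->] [d ->]; exists (fun k => c k + b * d k).
apply: functional_extensionality=> i; apply: functional_extensionality=> j.
rewrite mulr_sumr -big_split /=; apply: eq_bigr => k _; ring.
Qed.


Local Notation hc := (hcoef alpha).
Local Notation th := (alpha ^+ 2 - 1).

Lemma hc0 k : (0 < k)%N -> hc k 0 = 0.
Proof. by rewrite /hcoef /=; case: k. Qed.
Lemma hc_lt k t : (0 < t)%N -> (t < k)%N -> hc k t = th * alpha ^+ (k - t - 1).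
Proof. by move=> h1 h2; rewrite /hcoef h1 h2. Qed.
Lemma hc_eq k : hc k k = alpha.
Proof. by rewrite /hcoef ltnn andbF eqxx. Qed.
Lemma hc_gt k t : (k < t)%N -> hc k t = 0.
Proof.
move=> h; rewrite /hcoef.
have -> : (t < k)%N = false by apply/negbTE; rewrite -leqNgt ltnW.
by rewrite andbF gtn_eqF.
Qed.

Ltac hcs := repeat first [ rewrite hc_eq | (rewrite hc0; [|lia]) | (rewrite hc_gt; [|lia]) | (rewrite hc_lt; [|lia|lia]) ].

Lemma hrec_int k t : (0 < t)%N ->
  hc k.+2 t + hc k.+2 t.+2 = hc k.+3 t.+1 + hc k.+1 t.+1.
Proof.
move=> t0; case: (ltngtP t k) => H.
- hcs; congr (_ * _ ^+ _ + _ * _ ^+ _); lia.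
- case: (ltngtP t k.+2) => H2.
  + have E : t = k.+1 by lia.
    subst t; hcs; congr (_ * _ ^+ _ + _); lia.
  + hcs; ring.
  + rewrite H2; hcs; ring.
- rewrite H; hcs; congr (_ * _ ^+ _ + _); lia.
Qed.

Lemma PnaS k i j : Pna k.+1 alpha i j = (if j == (i + k.+1)%N then 1 else 0) +
  (if i == (j + k.+1)%N then 1 else 0) + hc k.+1 (i + j).+1.
Proof. by rewrite /= ToepE /Hna /Hankel addn1. Qed.

Lemma hc_eq' k t : k = t -> hc k t = alpha.
Proof. by move=> ->; apply: hc_eq. Qed.

Ltac hcs2 := repeat first [ (rewrite hc_eq'; [|lia]) | (rewrite hc0; [|lia]) | (rewrite hc_gt; [|lia]) | (rewrite hc_lt; [|lia|lia]) ].

Ltac exnorm := repeat match goal with |- context [alpha ^+ (?x - ?y)%N] =>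
  first [ rewrite (_ : (x - y = 0)%N); [|lia]
        | rewrite (_ : (x - y = 1)%N); [|lia]
        | rewrite (_ : (x - y = 2)%N); [|lia] ] end.

Lemma recS k : mul_band 1 (Aalpha alpha) (Pna k.+2 alpha) =
  fun i j => Pna k.+3 alpha i j + Pna k.+1 alpha i j.
Proof.
apply: functional_extensionality=> i; apply: functional_extensionality=> j.
rewrite mulAE; case: i => [|i]; rewrite !PnaS ?add0n ?addSn ?addnS.
  rewrite !add0n eqxx.
  case: (ltngtP j k) => H.
  - dec; hcs2.
    rewrite (_ : (k.+2 - j.+2 - 1 = k - j.+1)%N); [|lia].
    rewrite (_ : (k.+2 - j.+1 - 1 = (k - j.+1).+1)%N); [|lia].
    rewrite (_ : (k.+3 - j.+1 - 1 = (k - j.+1).+2)%N); [|lia].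
    rewrite !exprS; ring.
  - case: (ltngtP j k.+2) => H2.
    + dec; hcs2; exnorm; rewrite /= ?expr0 ?expr1; ring.
    + dec; hcs2; exnorm; rewrite /= ?expr0 ?expr1; ring.
    + dec; hcs2; exnorm; rewrite /= ?expr0 ?expr1; ring.
  - dec; hcs2; exnorm; rewrite /= ?expr0 ?expr1. ring.
have := @hrec_int k (i + j).+1 isT => E.
rewrite (_ : hc k.+2 (i + j).+3 = hc k.+3 (i + j).+2 + hc k.+1 (i + j).+2 - hc k.+2 (i+j).+1); last by rewrite -E; ring.
dec; ring.
Qed.

Lemma Pna0 i j : Pna 0 alpha i j = if i == j then 1 else 0.
Proof. by []. Qed.

Lemma rec0 : mul_band 1 (Aalpha alpha) (Pna 0 alpha) = Pna 1 alpha.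
Proof.
apply: functional_extensionality=> i; apply: functional_extensionality=> j.
rewrite mulAE; case: i => [|i]; rewrite !PnaS !Pna0 ?add0n ?addSn ?addnS;
  case: j => [|j]; dec; hcs2; rewrite /= ?mulr1 ?mulr0; ring.
Qed.

Lemma rec1 : mul_band 1 (Aalpha alpha) (Pna 1 alpha) =
  fun i j => Pna 2 alpha i j + 2 * Pna 0 alpha i j.
Proof.
apply: functional_extensionality=> i; apply: functional_extensionality=> j.
rewrite mulAE; case: i => [|[|[|i]]]; rewrite !PnaS !Pna0 ?add0n ?addSn ?addnS;
  case: j => [|[|[|j]]]; dec; hcs2; exnorm; rewrite /= ?expr0 ?expr1 ?mulr1 ?mulr0; ring.
Qed.

Local Notation A := (Aalpha alpha).

Lemma span_add1 m M X Y : spanN m M X -> spanN m M Y ->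
  spanN m M (fun i j => X i j + Y i j).
Proof.
move=> HX HY; have := span_add 1 HX HY.
by rewrite (_ : (fun i j => X i j + 1 * Y i j) = fun i j => X i j + Y i j) //;
  apply: functional_extensionality=> i; apply: functional_extensionality=> j; rewrite mul1r.
Qed.

Lemma mulA_lin m M c : mul_band 1 A (fun i j => \sum_(k < m.+1) c k * M k i j) =
  fun i j => \sum_(k < m.+1) c k * mul_band 1 A (M k) i j.
Proof.
apply: functional_extensionality=> i; apply: functional_extensionality=> j.
rewrite /mul_band; under eq_bigr do rewrite mulr_sumr.
rewrite exchange_big /=; apply: eq_bigr => k _; rewrite mulr_sumr.
apply: eq_bigr => l _; ring.
Qed.

Lemma spanA m X : spanN m (Apow alpha) X -> spanN m.+1 (Apow alpha) (mul_band 1 A X).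
Proof.
move=> [c ->]; rewrite mulA_lin.
exists (fun k => if k is k'.+1 then c k' else 0).
apply: functional_extensionality=> i; apply: functional_extensionality=> j.
rewrite [RHS]big_ord_recl mul0r add0r; apply: eq_bigr => k _ /=; done.
Qed.

Lemma P_in_A k : spanN k (Apow alpha) (Pna k alpha) /\ spanN k.+1 (Apow alpha) (Pna k.+1 alpha).
Proof.
have P0 : spanN 0 (Apow alpha) (Pna 0 alpha).
  exists (fun _ => 1).
  apply: functional_extensionality=> i; apply: functional_extensionality=> j.
  by rewrite big_ord_recl big_ord0 mul1r addr0.
elim: k => [|k [Hk Hk1]].
  by split=> //; rewrite -rec0; apply: spanA.
split=> //.
have Heq : exists c, Pna k.+2 alpha = fun i j => mul_band 1 A (Pna k.+1 alpha) i j + c * Pna k alpha i j.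
  case: k {Hk Hk1} => [|k].
    exists (-2); rewrite rec1.
    apply: functional_extensionality=> i; apply: functional_extensionality=> j; ring.
  exists (-1); rewrite recS.
  apply: functional_extensionality=> i; apply: functional_extensionality=> j; ring.
have [c ->] := Heq.
apply: (@span_add k.+2 _ (mul_band 1 A (Pna k.+1 alpha)) (Pna k alpha) c).
  exact: spanA.
by apply: span_mono Hk; lia.
Qed.

Lemma AP_in j : spanN j.+1 (fun k => Pna k alpha) (mul_band 1 A (Pna j alpha)).
Proof.
case: j => [|[|j]].
- by rewrite rec0; apply: (span_single (fun k => Pna k alpha)).
- rewrite rec1; apply: (@span_add 2 _ (Pna 2 alpha) (Pna 0 alpha) 2); first exact: (span_single (fun k => Pna k alpha)).
  by apply: (span_single (fun k => Pna k alpha)).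
- rewrite recS; apply: (@span_add1 j.+3 _ (Pna j.+3 alpha) (Pna j.+1 alpha)); first exact: (span_single (fun k => Pna k alpha)).
  by apply: (span_single (fun k => Pna k alpha)); lia.
Qed.

Lemma A_in_P k : spanN k (fun k => Pna k alpha) (Apow alpha k).
Proof.
elim: k => [|k [c Hc]].
  exists (fun _ => 1).
  apply: functional_extensionality=> i; apply: functional_extensionality=> j.
  by rewrite big_ord_recl big_ord0 mul1r addr0.
rewrite (_ : Apow alpha k.+1 = mul_band 1 A (Apow alpha k)) // Hc mulA_lin.
apply: (@span_comb k.+1 (fun l => mul_band 1 A (Pna l alpha)) _ c k) => l lk; apply: span_mono (AP_in l); lia.
Qed.


Lemma part2 n (a : 'I_n.+1 -> F) :
  lincomb a (fun k => Pna k alpha) =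
      (fun i j => Toeplitz (symlaurent a) i j
                  + \sum_(k < n.+1 | (1 <= k)%N) a k * Hna k alpha i j).
Proof.
apply: functional_extensionality=> i; apply: functional_extensionality=> j.
rewrite /lincomb.
set d := absz (j%:Z - i%:Z).
rewrite (eq_bigr (fun k : 'I_n.+1 => a k * (if d == k then 1 else 0) +
   (if (1 <= k)%N then a k * Hna k alpha i j else 0))); last first.
  move=> k _; case: k => [[|k] kn] /=.
    rewrite addr0 /Iinf; congr (_ * _).
    by have -> : (i == j) = (d == 0%N) by apply/eqP/eqP; rewrite /d; lia.
  rewrite ToepE mulrDr; congr (_ + _); congr (_ * _).
  rewrite (_ : (d == k.+1) = (j == i + k.+1)%N || (i == j + k.+1)%N); last first.
    by apply/eqP/orP; rewrite /d; [move=> H; lia | case=> /eqP; lia].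
  dec; rewrite /=; ring.
rewrite big_split /= -big_mkcond; congr (_ + _).
rewrite /Toeplitz /symlaurent -/d.
case: (leqP d n) => dn.
  have dn' : (d < n.+1)%N by [].
  rewrite (bigD1 (inord d)) //= inordK // eqxx mulr1 big1 ?addr0 // => k Hk.
  case: eqP; rewrite ?mulr0 // => E; exfalso; move/eqP: Hk; apply.
  by apply: val_inj; rewrite /= inordK // E.
rewrite big1 // => k _; case: eqP; rewrite ?mulr0 // => E.
have := ltn_ord k; lia.
Qed.
End S.

Theorem corollary5 (R : realType) (alpha : R[i]) (n : nat) :
  (forall X : simat R[i],
      in_span n (fun k => Pna k alpha) X <-> in_span n (Apow alpha) X)
  /\
  (forall a : 'I_n.+1 -> R[i],
      lincomb a (fun k => Pna k alpha) =
      (fun i j => Toeplitz (symlaurent a) i j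
                  + \sum_(k < n.+1 | (1 <= k)%N) a k * Hna k alpha i j)).
Proof.
split; last exact: part2.
move=> X; rewrite !in_spanE; split=> -[c ->].
  apply: (@span_comb _ n (fun k => Pna k alpha) _ c n) => k kn.
  exact: span_mono kn (P_in_A alpha k).1.
apply: (@span_comb _ n (Apow alpha) _ c n) => k kn.
exact: span_mono kn (A_in_P alpha k).
Qed.
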